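(* Let $H$ be a finite non-cyclic subgroup of $\mathrm{GL}(2,\mathbb{C})$ and $L:\mathcal{A}_2\to\mathrm{GL}(2,\mathbb{C})$ the linear-part morphism. Then the derived subgroup of $L^{-1}(H)=H\ltimes\mathbb{C}^2$ equals $D(H)\ltimes\mathbb{C}^2=L^{-1}(D(H))$.
   Context: $\mathcal{A}_2$ is the group of affine automorphisms $v\mapsto Mv+w$ of $\mathbb{C}^2$ ($M\in\mathrm{GL}(2,\mathbb{C})$, $w\in\mathbb{C}^2$), $L(v\mapsto Mv+w)=M$, and $\mathbb{C}^2\subseteq\mathcal{A}_2$ denotes the subgroup of translations. $D(H)$ denotes the subgroup generated by all commutators $ghg^{-1}h^{-1}$ of elements of $H$. *)

(* Defs.v *)
(* Complex numbers are R[i] = complex R for R : realType. *)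
From mathcomp Require Import all_boot all_algebra.
From mathcomp Require Import complex reals.
Set Implicit Arguments. Unset Strict Implicit. Unset Printing Implicit Defensive.
Import GRing.Theory.
Local Open Scope ring_scope.

Inductive genby (T : Type) (mul : T -> T -> T) (inv : T -> T) (one : T)
    (S : T -> Prop) : T -> Prop :=
| genby_base x : S x -> genby mul inv one S x
| genby_one : genby mul inv one S one
| genby_mul x y : genby mul inv one S x -> genby mul inv one S y ->
    genby mul inv one S (mul x y)
| genby_inv x : genby mul inv one S x -> genby mul inv one S (inv x).

Section Groups.
Variable C : comUnitRingType.

Definition gl_mul (A B : 'M[C]_2) : 'M[C]_2 := A *m B.
Definition gl_inv (A : 'M[C]_2) : 'M[C]_2 := invmx A.
Definition gl_one : 'M[C]_2 := 1%:M.

Definition is_GL2_subgroup (H : 'M[C]_2 -> Prop) : Prop :=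
  [/\ forall A, H A -> A \in unitmx,
      H gl_one,
      forall A B, H A -> H B -> H (gl_mul A B)
    & forall A, H A -> H (gl_inv A)].

Definition finite_set (H : 'M[C]_2 -> Prop) : Prop :=
  exists s : seq 'M[C]_2, forall A, H A <-> A \in s.

Definition cyclic_GL2 (H : 'M[C]_2 -> Prop) : Prop :=
  exists g : 'M[C]_2, forall A, H A <-> genby gl_mul gl_inv gl_one (eq g) A.

Definition gl_comm (A B : 'M[C]_2) : 'M[C]_2 :=
  gl_mul (gl_mul A B) (gl_mul (gl_inv A) (gl_inv B)).

Definition derived_GL2 (H : 'M[C]_2 -> Prop) : 'M[C]_2 -> Prop :=
  genby gl_mul gl_inv gl_one
    (fun X => exists A B, [/\ H A, H B & X = gl_comm A B]).

(* The affine group A_2: (M, w) stands for v |-> M v + w, with M in GL(2,C). *)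
Definition aff := ('M[C]_2 * 'cV[C]_2)%type.
Definition aff_L (g : aff) : 'M[C]_2 := g.1.
(* composition (f o g)(v) = f(g(v)) *)
Definition aff_mul (f g : aff) : aff := (f.1 *m g.1, f.1 *m g.2 + f.2).
Definition aff_inv (f : aff) : aff := (invmx f.1, - (invmx f.1 *m f.2)).
Definition aff_one : aff := (1%:M, 0).
Definition aff_comm (f g : aff) : aff :=
  aff_mul (aff_mul f g) (aff_mul (aff_inv f) (aff_inv g)).

Definition aff_preimage (H : 'M[C]_2 -> Prop) : aff -> Prop :=
  fun g => H (aff_L g).

Definition derived_aff (G : aff -> Prop) : aff -> Prop :=
  genby aff_mul aff_inv aff_one
    (fun x => exists f g, [/\ G f, G g & x = aff_comm f g]).

End Groups.

(* Main.v *)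
From HB Require Import structures.
Require Import Defs.
From mathcomp Require Import all_boot all_algebra all_fingroup all_solvable complex reals ring.
Set Implicit Arguments. Unset Strict Implicit. Unset Printing Implicit Defensive.
Import GRing.Theory Num.Theory.
Local Open Scope ring_scope.

Section FinG.
Variable (F : fieldType) (s : seq 'M[F]_2).
Hypothesis (s1 : 1%:M \in s) (smul : forall A B, A \in s -> B \in s -> A *m B \in s)
  (sinv : forall A, A \in s -> invmx A \in s) (sunit : forall A, A \in s -> A \in unitmx).
Definition GT := seq_sub s.
HB.instance Definition _ := Finite.on GT.
Definition gmul (x y : GT) : GT := SeqSub (smul (ssvalP x) (ssvalP y)).
Definition gone : GT := SeqSub s1.
Definition ginv (x : GT) : GT := SeqSub (sinv (ssvalP x)).
Lemma gmulA : associative gmul.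
Proof. by move=> x y z; apply: val_inj; rewrite /= mulmxA. Qed.
Lemma gmul1 : left_id gone gmul.
Proof. by move=> x; apply: val_inj; rewrite /= mul1mx. Qed.
Lemma gmulV : left_inverse gone ginv gmul.
Proof. by move=> x; apply: val_inj; rewrite /= mulVmx // sunit // ssvalP. Qed.
HB.instance Definition _ := Finite_isGroup.Build GT gmulA gmul1 gmulV.
Lemma val_gexp (x : GT) n : val (x ^+ n)%g = (val x) ^+ n.
Proof. elim: n => [|n IH] //=. rewrite expgS exprS /= IH. by []. Qed.

Variable lam : 'M[F]_2 -> F.
Hypothesis lamM : forall A B, A \in s -> B \in s -> lam (A *m B) = lam A * lam B.
Hypothesis lam1 : lam 1%:M = 1.
Hypothesis lamK : forall A, A \in s -> lam A = 1 -> forall n, (0 < n)%N -> A ^+ n = 1 -> A = 1%:M.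

Lemma fin_cyclic : exists2 g, g \in s & forall A, A \in s -> exists n, A = g ^+ n.
Proof.
have cyc : cyclic [set: GT].
  apply: (@field_mul_group_cyclic _ _ _ (fun x : GT => lam (val x))).
    by move=> x y _ _; rewrite /= lamM // ssvalP.
  move=> x _; split => [lx | ->]; last by [].
  apply: val_inj => /=; apply: (lamK (ssvalP x) lx (order_gt0 x)).
  by rewrite -val_gexp expg_order.
have [x Dx] := cyclicP cyc.
exists (val x); first exact: ssvalP.
move=> A As.
have : SeqSub As \in <[x]>%g by rewrite -Dx inE.
by case/cycleP => n /(congr1 val) /= ->; exists n; rewrite val_gexp.
Qed.
End FinG.
Section Lin.
Variable F : numFieldType.
Variable phi : 'rV[F]_2.
Hypothesis phi0 : phi != 0.

Definition ph (x : 'cV[F]_2) : F := (phi *m x) 0 0.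
Lemma phE x : ph x = phi 0 0 * x 0 0 + phi 0 1 * x 1 0.
Proof.
rewrite /ph mxE !big_ord_recl big_ord0 addr0.
by rewrite (_ : lift ord0 ord0 = 1 :> 'I_2); last by apply: val_inj.
Qed.
Lemma phD x y : ph (x + y) = ph x + ph y.
Proof. by rewrite /ph mulmxDr mxE. Qed.
Lemma phZ a x : ph (a *: x) = a * ph x.
Proof. by rewrite /ph -scalemxAr mxE. Qed.
Lemma phN x : ph (- x) = - ph x.
Proof. by rewrite /ph mulmxN mxE. Qed.

Lemma phi_ne : phi 0 0 != 0 \/ phi 0 1 != 0.
Proof.
case: (eqVneq (phi 0 0) 0) => [h0|]; last by left.
case: (eqVneq (phi 0 1) 0) => [h1|]; last by right.
case/negP: phi0; apply/eqP/matrixP => i j; rewrite ord1 mxE.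
by case: j => [[|[|]]] //= ? ; [rewrite (_ : Ordinal _ = 0) // ; apply: val_inj | rewrite (_ : Ordinal _ = 1) //; apply: val_inj].
Qed.

Definition u : 'cV[F]_2 := \col_i (if i == 0 then phi 0 1 else - phi 0 0).
Lemma u0 : u 0 0 = phi 0 1. Proof. by rewrite mxE. Qed.
Lemma u1 : u 1 0 = - phi 0 0. Proof. by rewrite mxE. Qed.
Lemma ph_u : ph u = 0.
Proof. by rewrite phE u0 u1; ring. Qed.
Lemma u_neq0 : u != 0.
Proof.
apply/negP => /eqP uz; have := phi_ne; rewrite -u0 -oppr_eq0 -u1 uz !mxE.
by case; rewrite eqxx.
Qed.

Lemma cV2P (x y : 'cV[F]_2) : x 0 0 = y 0 0 -> x 1 0 = y 1 0 -> x = y.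
Proof.
move=> h0 h1; apply/matrixP => i j; rewrite ord1.
case: i => [[|[|]]] //= ?.
  by rewrite (_ : Ordinal _ = 0) //; apply: val_inj.
by rewrite (_ : Ordinal _ = 1) //; apply: val_inj.
Qed.

Definition kc (x : 'cV[F]_2) : F :=
  if phi 0 1 != 0 then x 0 0 / phi 0 1 else - x 1 0 / phi 0 0.
Lemma kcP x : ph x = 0 -> x = kc x *: u.
Proof.
rewrite phE /kc => hx; case: ifP => [p1 | /negbT/negPn p1].
  apply: cV2P; rewrite !mxE /=; first by field.
  apply: (mulfI p1).
  have -> : x 0 0 / phi 0 1 * - phi 0 0 = - (phi 0 0 * x 0 0) / phi 0 1 by ring.
  rewrite [RHS]mulrC divfK //; apply/eqP; rewrite -addr_eq0 addrC hx //.
have := phi_ne; rewrite p1 => -[] // p0.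
move/eqP: p1 => p1; rewrite p1 mul0r addr0 in hx.
apply: cV2P; rewrite !mxE /=.
  move/eqP: hx; rewrite mulf_eq0 (negbTE p0) /= => /eqP ->.
  by rewrite p1 mulr0.
by field.
Qed.

Lemma scaleu_inj a b : a *: u = b *: u -> a = b.
Proof.
move/eqP; rewrite -subr_eq0 -scalerBl scalemx_eq0 (negbTE u_neq0) orbF subr_eq0.
by move/eqP.
Qed.

Lemma phM A x : phi *m A = phi -> ph (A *m x) = ph x.
Proof. by move=> hA; rewrite /ph mulmxA hA. Qed.

Definition lam (A : 'M[F]_2) := kc (A *m u).
Lemma lamP A : phi *m A = phi -> A *m u = lam A *: u.
Proof. by move=> hA; apply: kcP; rewrite phM // ph_u. Qed.

Lemma lamM A B : phi *m A = phi -> phi *m B = phi -> lam (A *m B) = lam A * lam B.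
Proof.
move=> hA hB; apply: scaleu_inj; rewrite -lamP ?mulmxA ?hA //.
by rewrite -mulmxA lamP // -scalemxAr lamP // scalerA mulrC.
Qed.

Lemma lam1 : lam 1%:M = 1.
Proof. by apply: scaleu_inj; rewrite -lamP ?mulmx1 // mul1mx scale1r. Qed.

Definition v : 'cV[F]_2 := \col_i (if phi 0 1 != 0 then (if i == 0 then 0 else (phi 0 1)^-1)
   else (if i == 0 then (phi 0 0)^-1 else 0)).
Lemma ph_v : ph v = 1.
Proof.
rewrite phE !mxE /=; case: ifP => [p1|/negbT/negPn p1].
  by rewrite mulr0 add0r divff.
have := phi_ne; rewrite p1 => -[] // p0.
by rewrite mulr0 addr0 divff.
Qed.

Lemma decomp x : x = kc (x - ph x *: v) *: u + ph x *: v.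
Proof.
rewrite -kcP ?subrK // phD phN phZ ph_v mulr1 subrr //.
Qed.

Lemma lamK A : phi *m A = phi -> lam A = 1 -> forall n, (0 < n)%N -> A ^+ n = 1 -> A = 1%:M.
Proof.
move=> hA l1 n n0 An.
have Au : A *m u = u by rewrite lamP // l1 scale1r.
set c := kc (A *m v - v).
have Av : A *m v = v + c *: u.
  by rewrite -kcP ?phD ?phN ?phM // ?subrr // addrC subrK.
have Ak : forall k, A ^+ k *m v = v + (k%:R * c) *: u.
  elim=> [|k IH]; first by rewrite expr0 mul1mx mul0r scale0r addr0.
  rewrite exprS -mulmxE -mulmxA IH mulmxDr -scalemxAr Au Av -addrA -scalerDl.
  by rewrite mulrSr mulrDl mul1r [c + _]addrC.
have c0 : c = 0.
  have := Ak n; rewrite An mul1mx => /eqP; rewrite addrC -subr_eq subrr eq_sym.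
  rewrite scalemx_eq0 (negbTE u_neq0) orbF mulf_eq0 pnatr_eq0 eqn0Ngt n0 /=.
  by move/eqP.
have Ax : forall x : 'cV[F]_2, A *m x = x.
  move=> x; rewrite [in RHS](decomp x) {1}(decomp x) mulmxDr -!scalemxAr Au Av c0.
  by rewrite scale0r addr0.
apply/matrixP => i j; have := Ax (delta_mx j 0); rewrite -colE => /matrixP/(_ i 0).
by rewrite !mxE eqxx andbT.
Qed.
End Lin.

Section Main.
Variable R : realType.
Local Notation C := (R[i]).
Variable H : 'M[C]_2 -> Prop.
Hypothesis HG : is_GL2_subgroup H.

Let P := aff_preimage H.

Lemma dir1 g : derived_aff P g -> aff_preimage (derived_GL2 H) g.
Proof.
rewrite /aff_preimage; elim => [x [f [g' [Hf Hg ->]]] | | x y _ IHx _ IHy | x _ IHx].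
- by apply: genby_base; exists f.1, g'.1.
- exact: genby_one.
- exact: genby_mul.
- exact: genby_inv.
Qed.

Lemma HGunit A : H A -> A \in unitmx. Proof. by case: HG => h _ _ _; apply: h. Qed.
Lemma HG1 : H 1%:M. Proof. by case: HG. Qed.
Lemma HGmul A B : H A -> H B -> H (A *m B). Proof. by case: HG => _ _ h _; apply: h. Qed.
Lemma HGinv A : H A -> H (invmx A). Proof. by case: HG => _ _ _ h; apply: h. Qed.

Lemma dirZ M : derived_GL2 H M -> derived_aff P (M, 0).
Proof.
elim => [x [A [B [HA HB ->]]] | | x y _ IHx _ IHy | x _ IHx].
- have -> : (gl_comm A B, 0) = aff_comm (A, 0) (B, 0 : 'cV[C]_2).
    by rewrite /aff_comm /aff_mul /aff_inv /= !(mulmx0, oppr0, addr0, subr0).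
  by apply: genby_base; exists (A, 0), (B, 0).
- exact: genby_one.
- have -> : (gl_mul x y, 0) = aff_mul (x, 0) (y, 0 : 'cV[C]_2).
    by rewrite /aff_mul /= mulmx0 addr0.
  exact: genby_mul.
- have -> : (gl_inv x, 0) = aff_inv (x, 0 : 'cV[C]_2).
    by rewrite /aff_inv /= mulmx0 oppr0.
  exact: genby_inv.
Qed.

Lemma dirT1 A x : H A -> derived_aff P (1%:M, A *m x - x).
Proof.
move=> HA.
have -> : (1%:M, A *m x - x) = aff_comm (A, 0) (1%:M, x).
  rewrite /aff_comm /aff_mul /aff_inv /= invmx1 !(mulmx0, mul1mx, mulmx1, oppr0, addr0, subr0).
  rewrite mulmxV ?HGunit // !mulmxN mulmxA mulmxV ?HGunit // mul1mx.
  by rewrite addrC.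
apply: genby_base; exists (A, 0), (1%:M, x); split => //; exact: HG1.
Qed.

Lemma dirTadd a b : derived_aff P (1%:M, a) -> derived_aff P (1%:M, b) ->
  derived_aff P (1%:M, a + b).
Proof.
move=> ha hb; have -> : (1%:M, a + b) = aff_mul (1%:M, b) (1%:M, a).
  by rewrite /aff_mul /= mul1mx mul1mx.
exact: genby_mul.
Qed.

Lemma Hfin_cyclic (s : seq 'M[C]_2) (Hs : forall A, H A <-> A \in s) (phi : 'rV[C]_2) :
  phi != 0 -> (forall A, A \in s -> phi *m A = phi) -> cyclic_GL2 H.
Proof.
move=> phi0 hphi.
have s1 : 1%:M \in s by apply/Hs; exact: HG1.
have smul : forall A B, A \in s -> B \in s -> A *m B \in s.
  by move=> A B /Hs hA /Hs hB; apply/Hs; apply: HGmul.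
have sinv : forall A, A \in s -> invmx A \in s.
  by move=> A /Hs hA; apply/Hs; apply: HGinv.
have sunit : forall A, A \in s -> A \in unitmx by move=> A /Hs; exact: HGunit.
have [g gs Dg] := fin_cyclic s1 smul sinv sunit
  (fun A B hA hB => lamM phi0 (hphi A hA) (hphi B hB)) (lam1 phi0)
  (fun A hA => lamK phi0 (hphi A hA)).
exists g => A; split.
  move/Hs/Dg => [n ->]; elim: n => [|n IH]; first exact: genby_one.
  rewrite exprS -mulmxE; apply: genby_mul => //; exact: genby_base.
elim => [x <- | | x y _ hx _ hy | x _ hx].
- exact/Hs.
- exact: HG1.
- exact: HGmul.
- exact: HGinv.
Qed.

Lemma transl (s : seq 'M[C]_2) (Hs : forall A, H A <-> A \in s) :
  ~ cyclic_GL2 H -> forall w, derived_aff P (1%:M, w).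
Proof.
move=> Hnc.
pose B_ := fun i : 'I_(size s) => (nth 0 s i - 1%:M)^T.
pose S := (\sum_i B_ i)%MS.
have Hn : forall i : 'I_(size s), H (nth 0 s i) by move=> i; apply/Hs; rewrite mem_nth.
case: (boolP (row_full S)) => [full | nfull].
  move=> w; have := submx_full w^T full; case/sub_sumsmxP => u_ Dw.
  rewrite -(trmxK w) Dw.
  apply: (big_ind (fun r : 'rV[C]_2 => derived_aff P (1%:M, r^T))).
  - rewrite trmx0; exact: genby_one.
  - by move=> a b ha hb; rewrite linearD /=; apply: dirTadd.
  - move=> i _; rewrite trmx_mul trmxK mulmxBl mul1mx; apply: dirT1; exact: Hn.
exfalso; apply: Hnc.
pose K := cokermx S.
have Knz : K != 0.
  apply/eqP => K0; have := mxrank_coker S; rewrite -/K K0 mxrank0 => /eqP.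
  rewrite eq_sym subn_eq0 => h; move: nfull; rewrite /row_full eqn_leq h rank_leq_col //.
have [j nzj] : exists j, col j K != 0.
  case: (pickP (fun j => col j K != 0)) => [j hj | hno]; first by exists j.
  case/negP: Knz; apply/eqP/matrixP => a b; have := hno b; rewrite /=.
  by move=> /negbT/negPn/eqP/matrixP/(_ a 0); rewrite !mxE.
apply: (Hfin_cyclic Hs (phi := (col j K)^T)).
  by rewrite trmx_eq0.
move=> A As; have iA : (index A s < size s)%N by rewrite index_mem.
have /submxP [D DB] : (B_ (Ordinal iA) <= S)%MS.
  exact: (sumsmx_sup (Ordinal iA)).
have h0 : B_ (Ordinal iA) *m col j K = 0.
  by rewrite DB colE mulmxA -(mulmxA D S K) mulmx_coker mulmx0 mul0mx.
move: h0; rewrite /B_ /= (nth_index 0 As) => /(congr1 trmx).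
rewrite trmx_mul trmxK trmx0 mulmxBr mulmx1 => /eqP; rewrite subr_eq0.
by move/eqP.
Qed.

End Main.

Theorem lemma3p20 (R : realType) (H : 'M[R[i]]_2 -> Prop) :
  is_GL2_subgroup H -> finite_set H -> ~ cyclic_GL2 H ->
  forall g : aff R[i],
    derived_aff (aff_preimage H) g <-> aff_preimage (derived_GL2 H) g.
Proof.
move=> HG [s Hs] Hnc g; split; first exact: dir1.
case: g => M w; rewrite /aff_preimage /aff_L /= => hM.
have -> : (M, w) = aff_mul (1%:M, w) (M, 0).
  by rewrite /aff_mul /= mul1mx mulmx0 add0r.
apply: genby_mul; first exact: transl Hs Hnc w.
exact: dirZ.
Qed.
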